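(* Let $(X_1,\ldots,X_d)$ be a continuous random vector and assume (H1) and (H2) for $(X_1,\ldots,X_d)$ and for all perturbed vectors below. Suppose that for every $k\in\{1,\ldots,d\}$ there is $\epsilon_0>0$ such that for all $|\epsilon|<\epsilon_0$, $\mathbb{E}\big[\sup_{v\in[0,u]}|g_k'(v-(1+\epsilon)X_k)|\big]<\infty$. Then for every $i\in\{1,\ldots,d\}$, $\lim_{\epsilon\to0}A_{X_1,\ldots,X_{i-1},(1+\epsilon)X_i,X_{i+1},\ldots,X_d}(u)=A_{X_1,\ldots,X_d}(u)$.
   Context: For a vector $\mathbf Y=(Y_1,\ldots,Y_d)$ of nonnegative random variables and capital $u\ge0$, $\mathcal{U}^d_u=\{v\in[0,u]^d:\sum_kv_k=u\}$ and $I_{\mathbf Y}(v)=\sum_{k=1}^d\mathbb{E}[g_k(v_k-Y_k)\mathbf 1_{\{Y_k>v_k\}}\mathbf 1_{\{\sum_lY_l\le u\}}]$, with penalty functions $g_k:(-\infty,0]\to[0,\infty)$ that are $C^1$, convex, $g_k(0)=0$ (with $g_k'(x)$ understood as $0$ where the indicator vanishes). (H1): $I_{\mathbf Y}$ has a unique minimizer on $\mathcal{U}^d_u$, denoted $A_{Y_1,\ldots,Y_d}(u)$ (the optimal allocation). (H2): the $g_k$ are differentiable, the relevant $g_k'(v_k-Y_k)$ are integrable, and each $(Y_k,\sum_lY_l)$ has a joint density. *)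

(* Defs.v *)
From HB Require Import structures.
From mathcomp Require Import all_boot all_order all_algebra.
From mathcomp Require Import all_classical all_reals all_analysis.
Set Implicit Arguments. Unset Strict Implicit. Unset Printing Implicit Defensive.
Import Order.TTheory GRing.Theory Num.Theory.
Import numFieldNormedType.Exports.
Local Open Scope classical_set_scope.
Local Open Scope ring_scope.

Section Allocation.
Context {R : realType} {dT : measure_display} {T : measurableType dT}
  (P : probability T R) (d : nat).

Definition total (Y : 'I_d -> T -> R) (w : T) : R := \sum_(k < d) Y k w.

Definition allocs (u : R) : set ('I_d -> R) :=
  [set v | (forall k, 0 <= v k <= u) /\ \sum_(k < d) v k = u].

Definition Icrit (g : 'I_d -> R -> R) (u : R) (Y : 'I_d -> T -> R)
    (v : 'I_d -> R) : \bar R :=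
  (\sum_(k < d) \int[P]_w
     (g k (v k - Y k w) * (if v k < Y k w then 1 else 0)
        * (if total Y w <= u then 1 else 0))%:E)%E.

Definition is_minimizer (g : 'I_d -> R -> R) (u : R) (Y : 'I_d -> T -> R)
    (v : 'I_d -> R) : Prop :=
  allocs u v /\ forall w, allocs u w -> (Icrit g u Y v <= Icrit g u Y w)%E.

Definition H1 (g : 'I_d -> R -> R) (u : R) (Y : 'I_d -> T -> R) : Prop :=
  exists! v, is_minimizer g u Y v.

Definition alloc (g : 'I_d -> R -> R) (u : R) (Y : 'I_d -> T -> R)
    : 'I_d -> R :=
  xget (fun _ => 0) [set v | is_minimizer g u Y v].

Definition has_joint_density (Z1 Z2 : T -> R) : Prop :=
  exists f : R * R -> R, (forall z, 0 <= f z) /\ measurable_fun setT f /\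
    forall B : set (R * R), measurable B ->
      P ((fun w => (Z1 w, Z2 w)) @^-1` B) =
      (\int[(@lebesgue_measure R) \x (@lebesgue_measure R)]_(z in B) (f z)%:E)%E.

(* (H2): g_k differentiable with derivative dg_k (given as hypotheses on
   g, dg elsewhere), the relevant g_k'(v_k - Y_k) integrable (with g_k'
   read as 0 where the indicator vanishes), and each (Y_k, sum_l Y_l)
   has a joint density. *)
Definition H2 (dg : 'I_d -> R -> R) (u : R) (Y : 'I_d -> T -> R) : Prop :=
  (forall v, allocs u v -> forall k,
     P.-integrable setT (fun w =>
       (dg k (v k - Y k w) * (if v k < Y k w then 1 else 0)
          * (if total Y w <= u then 1 else 0))%:E)) /\
  (forall k, has_joint_density (Y k) (total Y)).

Definition penalty (g dg : R -> R) : Prop :=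
  {within `]-oo, 0]%classic, continuous g} /\
  (forall x : R, x < 0 -> is_derive x (1 : R) g (dg x)) /\
  {within `]-oo, 0]%classic, continuous dg} /\
  (forall x y t : R, x <= 0 -> y <= 0 -> 0 <= t <= 1 ->
     g (t * x + (1 - t) * y) <= t * g x + (1 - t) * g y) /\
  (forall x : R, x <= 0 -> 0 <= g x) /\ g 0 = 0.

Definition scale_at (Y : 'I_d -> T -> R) (i : 'I_d) (c : R) : 'I_d -> T -> R :=
  fun k w => if k == i then c * Y k w else Y k w.

End Allocation.

Section SupDer.
Context {R : realType}.
Definition sup_absder (dg : R -> R) (u y : R) : \bar R :=
  ereal_sup [set (`|dg (v - y)| * (if v < y then 1 else 0))%:E
            | v in `[0, u]%classic].
End SupDer.

(* Main.v *)
Require Import Defs.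
From HB Require Import structures.
From mathcomp Require Import all_boot all_order all_algebra.
From mathcomp Require Import all_classical all_reals all_analysis.
From mathcomp Require Import measurable_realfun.
From mathcomp Require Import lra.
Import Order.TTheory GRing.Theory Num.Theory.
Import numFieldNormedType.Exports.
Local Open Scope classical_set_scope.
Local Open Scope ring_scope.

Section helpers.
Context {R : realType}.

Lemma ind_lt_cvg (a b : nat -> R) (la lb : R) :
  a n @[n --> \oo] --> la -> b n @[n --> \oo] --> lb -> la != lb ->
  (fun n => if a n < b n then 1 else 0 : R) @ \oo --> ((if la < lb then 1 else 0) : R).
Proof.
move=> ha hb nab.
have hd : (b n - a n) @[n --> \oo] --> lb - la by exact: cvgB.
case: (ltgtP la lb) => hl; last by rewrite hl eqxx in nab.
- apply: cvg_near_cst.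
  have := @cvgr_gt R nat \oo _ _ _ hd 0; rewrite subr_gt0 => /(_ _ hl).
  by apply: filterS => n; rewrite subr_gt0 => ->.
- apply: cvg_near_cst.
  have := @cvgr_lt R nat \oo _ _ _ hd 0; rewrite subr_lt0 => /(_ _ hl).
  by apply: filterS => n; rewrite subr_lt0 => /ltW; rewrite leNgt => /negbTE ->.
Qed.

Lemma ind_le_cvg (a : nat -> R) (la c : R) :
  a n @[n --> \oo] --> la -> la != c ->
  (fun n => if a n <= c then 1 else 0 : R) @ \oo --> ((if la <= c then 1 else 0) : R).
Proof.
move=> ha hc.
have := @ind_lt_cvg (fun=> c) a c la (cvg_cst c) ha; rewrite eq_sym => /(_ _ hc) h.
have -> : (if la <= c then 1 else 0 : R) = 1 - (if c < la then 1 else 0).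
  by rewrite leNgt; case: (c < la) => /=; rewrite ?subr0 ?subrr.
have h2 := cvgB (F := \oo) (cvg_cst (1:R)) h.
apply: (cvg_trans _ (h2 _ _)); apply: near_eq_cvg; apply: nearW => n /=.
change ((1:R) - (if c < a n then 1 else 0) = if a n <= c then 1 else 0).
by rewrite leNgt; case: (c < a n) => /=; rewrite ?subr0 ?subrr.
Qed.

Lemma sum_cvg (I : Type) (r : seq I) (f : I -> nat -> R) (l : I -> R) :
  (forall j, f j n @[n --> \oo] --> l j) ->
  (\sum_(j <- r) f j n) @[n --> \oo] --> \sum_(j <- r) l j.
Proof.
move=> hf; elim: r => [|j r IH].
  rewrite big_nil; apply: cvg_near_cst; apply: nearW => n; by rewrite big_nil.
rewrite big_cons; apply: (cvg_trans _ (cvgD (hf j) IH)).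
by apply: near_eq_cvg; apply: nearW => n /=; rewrite big_cons.
Qed.

Lemma subseq_cvg (T : topologicalType) (w : nat -> T) (l : T) (f : nat -> nat) :
  (forall n, (n <= f n)%N) -> w n @[n --> \oo] --> l -> (w \o f) n @[n --> \oo] --> l.
Proof.
move=> hf hw; apply: cvg_comp hw => P [N _ HN]; exists N => // n /= Nn.
by apply: HN; apply: leq_trans Nn (hf n).
Qed.

Lemma incr_ge (f : nat -> nat) : increasing_seq f -> forall n, (n <= f n)%N.
Proof.
move=> hf; elim => [//|n IH].
have : (f n < f n.+1)%N.
  by rewrite ltnNge; have := hf n.+1 n; rewrite /Order.le /= => ->; rewrite ltnn.
by apply: leq_ltn_trans.
Qed.

Lemma incr_comp (f g : nat -> nat) : increasing_seq f -> increasing_seq g ->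
  increasing_seq (f \o g).
Proof. by move=> hf hg m n; exact: (etrans (hf (g m) (g n)) (hg m n)). Qed.

Lemma multi_bw (d : nat) (v : nat -> 'I_d -> R) (B : R) :
  (forall n k, `|v n k| <= B) ->
  exists2 phi : nat -> nat, increasing_seq phi &
    forall k, cvgn (fun n => v (phi n) k).
Proof.
move=> hB.
suff : forall m, exists2 phi : nat -> nat, increasing_seq phi &
    forall k : 'I_d, (k < m)%N -> cvgn (fun n => v (phi n) k).
  by move=> /(_ d) [phi hphi H]; exists phi => // k; exact: H.
elim => [|m [phi hphi IH]].
  by exists id => // k.
have [hm|hm] := ltnP m d; last first.
  exists phi => // k km; apply: IH; exact: leq_trans (ltn_ord k) hm.
pose km : 'I_d := Ordinal hm.
have bnd : bounded_fun (fun n => v (phi n) km).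
  rewrite /bounded_near; near=> M => n _ /=.
  apply: le_trans (hB _ _) _; near: M; apply: nbhs_pinfty_ge; exact: num_real.
have [psi hpsi hc] := @bolzano_weierstrass R (fun n => v (phi n) km) bnd.
exists (phi \o psi); first exact: incr_comp.
  move=> k; rewrite ltnS leq_eqVlt => /orP[/eqP kE|kl].
    have -> : k = km by apply: val_inj.
    exact: hc.
  have /cvg_ex [l hl] := IH k kl.
  apply/cvg_ex; exists l.
  have H := @subseq_cvg _ _ _ psi (@incr_ge psi hpsi) hl; exact: H.
Unshelve. all: by end_near.
Qed.
End helpers.

Section h2.
Context {R : realType}.
Lemma min0_cvgF (I : Type) (F : set_system I) (FF : Filter F) (x : I -> R) l :
  x n @[n --> F] --> l ->
  Num.min (x n) 0 @[n --> F] --> Num.min l 0.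
Proof.
move=> hx.
under eq_fun => n do rewrite minr_absE.
rewrite minr_absE; apply: cvgM; [|exact: cvg_cst]; apply: cvgB.
  by apply: cvgD => //; exact: cvg_cst.
by apply: cvg_norm; apply: cvgB => //; exact: cvg_cst.
Qed.

Lemma gmin_cvgF (g : R -> R) : {within `]-oo, 0]%classic, continuous g} ->
  forall (I : Type) (F : set_system I) (FF : Filter F) (x : I -> R) l,
  x n @[n --> F] --> l ->
  g (Num.min (x n) 0) @[n --> F] --> g (Num.min l 0).
Proof.
move=> hg I F FF x l hx.
have hm := @min0_cvgF I F FF x l hx.
have Ay : `]-oo, 0]%classic (Num.min l 0) by rewrite /= in_itv /= ge_min lexx orbT.
have hgy := (subspace_continuousP _ g).1 hg _ Ay.
have hw : (fun n => Num.min (x n) 0) @ F --> within `]-oo, 0]%classic (nbhs (Num.min l 0)).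
  move=> P /= hP; apply: (@filterS I F _ _ _ _ (hm _ hP)) => n /= H; apply: H.
  by rewrite /= in_itv /= ge_min lexx orbT.
exact: (cvg_comp _ _ hw hgy).
Qed.

Lemma gmin_cont (g : R -> R) : {within `]-oo, 0]%classic, continuous g} ->
  continuous (fun x : R => g (Num.min x 0)).
Proof.
move=> hg x; exact: (@gmin_cvgF g hg R (nbhs x) _ id x cvg_id).
Qed.
End h2.

Lemma density_line (R : realType) (dT : measure_display) (T : measurableType dT)
  (P : probability T R) (Z1 Z2 : T -> R) (c : R) :
  has_joint_density P Z1 Z2 -> P [set w | Z2 w = c] = 0%E.
Proof.
move=> [f [f0 [mf hf]]].
have mB : measurable (setT `*` [set c] : set (R * R)).
  by apply: measurableX => //.
have := hf _ mB.
have -> : (fun w => (Z1 w, Z2 w)) @^-1` (setT `*` [set c]) = [set w | Z2 w = c].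
  by apply/seteqP; split => w /=; [case|split].
move=> ->.
apply: null_set_integral => //.
  apply/measurable_realfun.measurable_EFinP; exact: measurable_funS mf.
have H := @product_measure1E _ _ _ _ _ lebesgue_measure lebesgue_measure setT [set c] measurableT (measurable_set1 c).
apply: (etrans H); rewrite -[RHS](mule0 (lebesgue_measure setT)); congr (_ * _)%E.
exact: lebesgue_measure_set1.
Qed.

Section main.
Context (R : realType) (dT : measure_display) (T : measurableType dT)
  (P : probability T R) (d : nat) (u : R) (g : 'I_d -> R -> R)
  (X : 'I_d -> T -> R) (i : 'I_d).
Hypothesis hu : 0 <= u.
Hypothesis gcont : forall k, {within `]-oo, 0]%classic, continuous (g k)}.
Hypothesis gpos : forall k x, x <= 0 -> 0 <= g k x.
Hypothesis mX : forall k, measurable_fun setT (X k).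
Hypothesis X0 : forall k w, 0 <= X k w.

Definition term k (c z s : R) : R :=
  g k (c - z) * (if c < z then 1 else 0) * (if s <= u then 1 else 0).

Lemma termE k c z s : term k c z s =
  g k (Num.min (c - z) 0) * (if c < z then 1 else 0) * (if s <= u then 1 else 0).
Proof.
rewrite /term; case: ifP => h; last by rewrite !mulr0 !mul0r.
by rewrite min_l // subr_le0 ltW.
Qed.

Lemma term_ge0 k c z s : 0 <= term k c z s.
Proof.
rewrite /term; case: ifP => h; last by rewrite mulr0 mul0r.
apply: mulr_ge0; last by case: ifP.
by rewrite mulr1; apply: gpos; rewrite subr_le0 ltW.
Qed.

Lemma meas_term k c (Z S : T -> R) : measurable_fun setT Z ->
  measurable_fun setT S ->
  measurable_fun setT (fun w => (term k c (Z w) (S w))%:E).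
Proof.
move=> mZ mS; apply/measurable_realfun.measurable_EFinP.
rewrite (_ : (fun w => term k c (Z w) (S w)) = (fun w =>
  g k (Num.min (c - Z w) 0) * (if c < Z w then 1 else 0) *
  (if S w <= u then 1 else 0))); last by apply/funext => w; rewrite termE.
apply: measurable_realfun.measurable_funM; first apply: measurable_realfun.measurable_funM.
- have h1 := measurable_realfun.continuous_measurable_fun (@gmin_cont R (g k) (gcont k)).
  have h2 := measurable_realfun.measurable_funB (measurable_cst c) mZ.
  exact: (measurableT_comp h1 h2).
- apply: measurable_fun_ifT; [|exact: measurable_cst|exact: measurable_cst].
  exact: measurable_realfun.measurable_fun_ltr (measurable_cst _) mZ.
- apply: measurable_fun_ifT; [|exact: measurable_cst|exact: measurable_cst].
  exact: measurable_realfun.measurable_fun_ler mS (measurable_cst _).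
Qed.

Lemma mY c k : measurable_fun setT (scale_at X i c k).
Proof.
rewrite /scale_at; case: (k == i); last exact: mX.
exact: measurable_realfun.measurable_funM (measurable_cst _) (mX k).
Qed.

Lemma mtot (Y : 'I_d -> T -> R) : (forall k, measurable_fun setT (Y k)) ->
  measurable_fun setT (Defs.total Y).
Proof. by move=> mY'; rewrite /Defs.total; apply: measurable_sum. Qed.

Lemma gbound k : exists M, 0 <= M /\ forall x, -u <= x <= 0 -> g k x <= M.
Proof.
have hu' : -u <= 0 by rewrite oppr_le0.
have hc : {within `[-u, 0]%classic, continuous (g k)}.
  apply: continuous_subspaceW (gcont k) => x /=; rewrite !in_itv /= => /andP[_ ->].
  done.
have [c hc1 hc2] := EVT_max hu' hc.
exists (g k c); split.
- have h0 : (0:R) \in `[-u, 0] by rewrite in_itv /= hu' lexx.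
  apply: le_trans (hc2 _ h0); apply: gpos; exact: lexx.
- by move=> x hx; apply: hc2; rewrite in_itv.
Qed.

Lemma term_le k M c z s : 0 <= c -> z <= s ->
  (forall x, -u <= x <= 0 -> g k x <= M) -> 0 <= M -> term k c z s <= M.
Proof.
move=> c0 zs hM M0; rewrite /term; case: ifP => h1; last by rewrite mulr0 mul0r.
case: ifP => h2; last by rewrite mulr0.
rewrite !mulr1; apply: hM; apply/andP; split; last by rewrite subr_le0 ltW.
lra.
Qed.

Lemma le_tot (Y : 'I_d -> T -> R) k w : (forall l, 0 <= Y l w) ->
  Y k w <= Defs.total Y w.
Proof.
move=> hY; rewrite /Defs.total (bigD1 k) //= lerDl.
by apply: sumr_ge0 => l _; exact: hY.
Qed.

Lemma term_cvg k (cn zn sn : nat -> R) c z s :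
  cn n @[n --> \oo] --> c -> zn n @[n --> \oo] --> z -> sn n @[n --> \oo] --> s ->
  c != z -> s != u ->
  term k (cn n) (zn n) (sn n) @[n --> \oo] --> term k c z s.
Proof.
move=> hc hz hs cz su.
rewrite termE; under eq_fun => n do rewrite termE.
apply: cvgM; [apply: cvgM|].
- apply: (@gmin_cvgF R (g k) (gcont k) nat \oo _ (fun n => cn n - zn n)).
  exact: cvgB.
- exact: ind_lt_cvg.
- exact: ind_le_cvg.
Qed.

Lemma Y_cvg (e : nat -> R) l w : e n @[n --> \oo] --> 0 ->
  scale_at X i (1 + e n) l w @[n --> \oo] --> X l w.
Proof.
move=> he; rewrite /scale_at; case: (l == i); last exact: cvg_cst.
have H : (1 + 0) * X l w = X l w by rewrite addr0 mul1r.
rewrite -[Z in _ --> Z]H; apply: cvgM; [apply: cvgD|]; [exact: cvg_cst|exact: he|exact: cvg_cst].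
Qed.

Lemma tot_cvg (e : nat -> R) w : e n @[n --> \oo] --> 0 ->
  Defs.total (scale_at X i (1 + e n)) w @[n --> \oo] --> Defs.total X w.
Proof.
move=> he; rewrite /Defs.total; apply: sum_cvg => l; exact: Y_cvg.
Qed.

Lemma int_cvg k (e : nat -> R) (v : nat -> 'I_d -> R) (vs : 'I_d -> R) :
  (forall n, 0 < 1 + e n) -> e n @[n --> \oo] --> 0 ->
  (forall n, allocs u (v n)) -> (forall l, v n l @[n --> \oo] --> vs l) ->
  P [set w | X k w = vs k] = 0%E -> P [set w | Defs.total X w = u] = 0%E ->
  (\int[P]_w (term k (v n k) (scale_at X i (1 + e n) k w)
       (Defs.total (scale_at X i (1 + e n)) w))%:E)%E @[n --> \oo] -->
  (\int[P]_w (term k (vs k) (X k w) (Defs.total X w))%:E)%E.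
Proof.
move=> he0 he hv hvs N1 N2.
have [M [M0 hM]] := gbound k.
pose fn n w := (term k (v n k) (scale_at X i (1 + e n) k w)
       (Defs.total (scale_at X i (1 + e n)) w))%:E.
pose f w := (term k (vs k) (X k w) (Defs.total X w))%:E.
have mfn : forall n, measurable_fun setT (fn n).
  move=> n; apply: meas_term; [exact: mY|apply: mtot => l; exact: mY].
have mf : measurable_fun setT f by apply: meas_term; [exact: mX| exact: mtot].
have ig : P.-integrable setT (EFin \o cst M) :=
  finite_measure_integrable_cst P M measurableT.
have fg : {ae P, forall x n, setT x -> `|fn n x| <= (EFin \o cst M) x}%E.
  apply: aeW => w n _ /=. rewrite lee_fin ger0_norm ?term_ge0 //.
  apply: term_le => //.
  - by have [/(_ k) /andP[]] := hv n.
  - apply: le_tot => l; rewrite /scale_at; case: (l == i) => //.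
    apply: mulr_ge0; [exact: ltW|exact: X0].
have ff : {ae P, forall x, setT x -> fn ^~ x @ \oo --> f x}.
  have mA : measurable [set w | X k w = vs k].
    have := mX k measurableT _ (measurable_set1 (vs k)); by rewrite setTI.
  have mB : measurable [set w | Defs.total X w = u].
    have := @mtot X mX measurableT _ (measurable_set1 u); by rewrite setTI.
  exists ([set w | X k w = vs k] `|` [set w | Defs.total X w = u]); split.
  - exact: measurableU.
  - exact: null_set_setU.
  - move=> w /= nw; apply: contra_notP nw => /not_orP [h1 h2] _.
    apply: cvg_EFin; first by apply: nearW.
    apply: term_cvg => //; [exact: Y_cvg| exact: tot_cvg| |].
      by apply/eqP => E; apply: h1; rewrite E.
    by apply/eqP.
have [_ _ DC] := dominated_convergence measurableT mfn mf ff ig fg.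
exact: DC.
Qed.

Lemma Icrit_cvg (e : nat -> R) (v : nat -> 'I_d -> R) (vs : 'I_d -> R) :
  (forall n, 0 < 1 + e n) -> e n @[n --> \oo] --> 0 ->
  (forall n, allocs u (v n)) -> (forall l, v n l @[n --> \oo] --> vs l) ->
  (forall k, P [set w | X k w = vs k] = 0%E) -> P [set w | Defs.total X w = u] = 0%E ->
  Icrit P g u (scale_at X i (1 + e n)) (v n) @[n --> \oo] --> Icrit P g u X vs.
Proof.
move=> he0 he hv hvs N1 N2; rewrite /Icrit; apply: cvg_nnesum.
- move=> k _; apply: nearW => n; apply: integral_ge0 => w _.
  rewrite lee_fin; exact: (term_ge0 k).
- move=> k _; have H := @int_cvg k e v vs he0 he hv hvs (N1 k) N2; rewrite /term in H; exact: H.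
Qed.
End main.
Theorem mainTheorem7 (R : realType) (dT : measure_display) (T : measurableType dT)
  (P : probability T R) (d : nat) (u : R) (g dg : 'I_d -> R -> R)
  (X : 'I_d -> T -> R) :
  0 <= u ->
  (forall k, penalty (g k) (dg k)) ->
  (forall k, measurable_fun setT (X k)) ->
  (forall k w, 0 <= X k w) ->
  (* (X_1,...,X_d) is continuous: no component has an atom *)
  (forall k (x : R), P [set w | X k w = x] = 0%E) ->
  (* (H1), (H2) for (X_1,...,X_d) and for the perturbed vectors *)
  H1 P g u X -> H2 P dg u X ->
  (forall i, \forall e \near 0,
     H1 P g u (scale_at X i (1 + e)) /\ H2 P dg u (scale_at X i (1 + e))) ->
  (forall k, exists2 e0 : R, 0 < e0 & forall e : R, `|e| < e0 ->
     (\int[P]_w sup_absder (dg k) u ((1 + e) * X k w) < +oo)%E) ->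
  forall i k,
    alloc P g u (scale_at X i (1 + e)) k @[e --> 0^'] --> alloc P g u X k.
Proof.
move=> hu hpen mX X0 noatom H1X H2X Hnear _ i k.
have gcont : forall k, {within `]-oo, 0]%classic, continuous (g k)}.
  by move=> l; have [] := hpen l.
have gpos : forall k x, x <= 0 -> 0 <= g k x.
  by move=> l; have [_ [_ [_ [_ [? _]]]]] := hpen l.
have htot : P [set w | Defs.total X w = u] = 0%E.
  exact: (@density_line _ _ _ P _ _ u (H2X.2 i)).
set a := alloc P g u X.
have [a0 [Ha0 Huniq]] := H1X.
have ha : is_minimizer P g u X a by apply: xgetPex; exists a0.
have [δ0 δ0pos Hδ] : exists2 δ : R, 0 < δ & forall e : R, `|e| < δ ->
    Defs.H1 P g u (scale_at X i (1 + e)).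
  have /nbhs_ballP [δ δpos Hb] := Hnear i.
  exists δ => // e he; have [] := Hb e => //.
  by rewrite /ball /= sub0r normrN.
apply/cvgrPdist_lt => eps eps0.
apply: contrapT => Hn.
have key : forall r : R, 0 < r -> exists e : R,
    [/\ e != 0, `|e| < r & eps <= `|a k - alloc P g u (scale_at X i (1 + e)) k|].
  move=> r r0; apply: contrapT => Hr; apply: Hn.
  apply/nbhs_ballP; exists r => // e /= He ne0.
  rewrite ltNge; apply/negP => Hle; apply: Hr; exists e; split => //.
  by move: He; rewrite /ball /= sub0r normrN.
pose c : R := Num.min δ0 (2^-1).
have c0 : 0 < c by rewrite lt_min δ0pos invr_gt0 ltr0n.
have hn1 : forall n : nat, 0 < (n.+1%:R : R)^-1 by move=> n; rewrite invr_gt0 ltr0n.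
have hcn : forall n : nat, c * (n.+1%:R : R)^-1 <= c.
  move=> n; apply: ler_piMr; first exact: ltW.
  by rewrite invf_le1 ?ltr0n // ler1n.
have key2 : forall n : nat, exists e : R,
    [/\ e != 0, `|e| < c * (n.+1%:R)^-1 &
     eps <= `|a k - alloc P g u (scale_at X i (1 + e)) k|].
  by move=> n; apply: key; rewrite mulr_gt0.
have [ef hef] := choice key2.
have efd : forall n, `|ef n| < δ0.
  move=> n; have [_ h _] := hef n; apply: (lt_le_trans h); apply: (le_trans (hcn n)).
  by rewrite ge_min lexx.
have ef2 : forall n, `|ef n| < 2^-1.
  move=> n; have [_ h _] := hef n; apply: (lt_le_trans h); apply: (le_trans (hcn n)).
  by rewrite ge_min lexx orbT.
have he0 : forall n, 0 < 1 + ef n.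
  move=> n; have := ef2 n; rewrite ltr_norml => /andP[h1 _].
  have : - 2^-1 < ef n by [].
  have h2 : (2^-1 : R) < 1 by rewrite invf_lt1 ?ltr0n // ltr1n.
  by move=> h3; lra.
have he : ef n @[n --> \oo] --> 0.
  have hh : (fun n : nat => c * (n.+1%:R : R)^-1) @ \oo --> 0.
    rewrite -(mulr0 c); apply: cvgM; [exact: cvg_cst|exact: cvg_harmonic].
  apply: (@squeeze_cvgr _ _ _ _ (fun n => - (c * (n.+1%:R : R)^-1))
    (fun n => c * (n.+1%:R : R)^-1)).
  - apply: nearW => n; have [_ h _] := hef n; rewrite -ler_norml; exact: ltW.
  - rewrite -oppr0; exact: cvgN.
  - exact: hh.
pose v n := alloc P g u (scale_at X i (1 + ef n)).
have hvmin : forall n, is_minimizer P g u (scale_at X i (1 + ef n)) (v n).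
  move=> n; apply: xgetPex; have [x [hx _]] := Hδ _ (efd n); by exists x.
have hvall : forall n, allocs u (v n) by move=> n; exact: (hvmin n).1.
have hB : forall n l, `|v n l| <= u.
  move=> n l; have [/(_ l) /andP[h1 h2] _] := hvall n; by rewrite ger0_norm.
have [phi hphi hc] := @multi_bw _ d v u hB.
pose vs l := lim (v (phi n) l @[n --> \oo]).
have hvs : forall l, v (phi n) l @[n --> \oo] --> vs l by move=> l; exact: hc.
pose e' n := ef (phi n).
have he' : e' n @[n --> \oo] --> 0.
  exact: (@subseq_cvg _ ef 0 phi (@incr_ge phi hphi) he).
have he0' : forall n, 0 < 1 + e' n by move=> n; exact: he0.
have hvall' : forall n, allocs u (v (phi n)) by move=> n; exact: hvall.
have vsall : allocs u vs.
  split.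
  - move=> l; apply/andP; split.
      apply: limr_ge; first exact: hc.
      apply: nearW => n; have [/(_ l) /andP[h1 h2] _] := hvall (phi n); exact: h1.
    apply: limr_le; first exact: hc.
    apply: nearW => n; have [/(_ l) /andP[h1 h2] _] := hvall (phi n); exact: h2.
  - have H := @sum_cvg _ _ (index_enum 'I_d) (fun l n => v (phi n) l) vs hvs.
    have H' : (fun n => \sum_(l <- index_enum 'I_d) v (phi n) l) = fun=> u.
      by apply/funext => n; have [_ ->] := hvall (phi n).
    rewrite H' in H; exact: (cvg_unique _ H (cvg_cst u)).
have hJ := @Icrit_cvg R dT T P d u g X i hu gcont gpos mX X0 e' (fun n => v (phi n)) vs
  he0' he' hvall' hvs (fun l => noatom l (vs l)) htot.
have vsmin : is_minimizer P g u X vs.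
  split => // w hw.
  have hJw := @Icrit_cvg R dT T P d u g X i hu gcont gpos mX X0 e' (fun=> w) w
    he0' he' (fun=> hw) (fun l => cvg_cst (w l)) (fun l => noatom l (w l)) htot.
  have {}hJw := hJw eventually_filter.
  have Hle : \forall n \near \oo, (Icrit P g u (scale_at X i (1 + e' n)) (v (phi n))
      <= Icrit P g u (scale_at X i (1 + e' n)) w)%E.
    by apply: nearW => n; exact: (hvmin (phi n)).2 w hw.
  have := lee_lim (cvgP _ hJ) (cvgP _ hJw) Hle.
  move/(_ eventually_filter); by rewrite (cvg_lim (@ereal_hausdorff R) hJ) (cvg_lim (@ereal_hausdorff R) hJw).
have avs : a = vs by rewrite -(Huniq _ ha) (Huniq _ vsmin).
have := hvs k; rewrite -avs => /cvgrPdist_lt /(_ _ eps0) /filter_ex [n hn].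
have [_ _ h] := hef (phi n).
by move: hn; rewrite ltNge h.
Qed.
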